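(* Let $P$ be a set of $n$ points in the plane, no three collinear and no two on a common horizontal line. As $\beta$ runs from $0$ to $\pi$, the total number of events (insertion, deletion, overlap and release events) of $\mathcal{O}_\beta\mathcal{H}(P)$ is $O(n)$.
   Context: For $\beta\in(0,\pi)$, $\mathcal{O}_\beta$ is the pair of lines through the origin with slopes $0$ and $\tan\beta$. Given an apex $a$, every point is uniquely $a+s(1,0)+t(\cos\beta,\sin\beta)$; the four $\mathcal{O}_\beta$-quadrants with apex $a$ are the open sets with $s>0,t>0$ (top-right), $s<0,t>0$ (top-left), $s>0,t<0$ (bottom-right), $s<0,t<0$ (bottom-left); top-right/bottom-left and top-left/bottom-right are opposite pairs. A quadrant is $P$-free if it contains no point of $P$, and $\mathcal{O}_\beta\mathcal{H}(P)$ is the plane minus the union of all $P$-free $\mathcal{O}_\beta$-quadrants. For each quadrant type, the points of $P$ that are apices of a $P$-free quadrant of that type are the vertices of the corresponding $\mathcal{O}_\beta$-staircase. A maximal $\mathcal{O}_\beta$-quadrant is a $P$-free $\mathcal{O}_\beta$-quadrant each of whose two boundary rays contains a point of $P$; an overlapping region is a nonempty intersection of two opposite maximal quadrants (identified by the points of $P$ supporting the two quadrants). An insertion (resp. deletion) event is a value of $\beta$ at which a point of $P$ becomes (resp. ceases to be) a vertex of one of the four staircases; an overlap (resp. release) event is a value of $\beta$ at which an overlapping region is created (resp. destroyed). *)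

(* Defs.v *)
From Stdlib Require Import Reals List.
Open Scope R_scope.

Definition point := (R * R)%type.

Inductive quadtype := TR | TL | BR | BL.

(* sign of the s-coordinate (along (1,0)) and t-coordinate (along (cos b, sin b)) *)
Definition sgn_s (q : quadtype) : R :=
  match q with TR | BR => 1 | TL | BL => -1 end.
Definition sgn_t (q : quadtype) : R :=
  match q with TR | TL => 1 | BR | BL => -1 end.

Definition opp_type (q : quadtype) : quadtype :=
  match q with TR => BL | BL => TR | TL => BR | BR => TL end.

Definition decomp (b : R) (a x : point) (s t : R) : Prop :=
  fst x = fst a + s + t * cos b /\ snd x = snd a + t * sin b.

Definition in_quad (b : R) (q : quadtype) (a x : point) : Prop :=
  exists s t, decomp b a x s t /\ sgn_s q * s > 0 /\ sgn_t q * t > 0.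

Definition on_hray (b : R) (q : quadtype) (a x : point) : Prop :=
  exists s, decomp b a x s 0 /\ sgn_s q * s > 0.
Definition on_bray (b : R) (q : quadtype) (a x : point) : Prop :=
  exists t, decomp b a x 0 t /\ sgn_t q * t > 0.

Definition P_free (P : list point) (b : R) (q : quadtype) (a : point) : Prop :=
  forall x, In x P -> ~ in_quad b q a x.

Definition stair_vertex (P : list point) (b : R) (q : quadtype) (p : point) : Prop :=
  In p P /\ P_free P b q p.

Definition max_quad (P : list point) (b : R) (q : quadtype) (a h v : point) : Prop :=
  P_free P b q a /\ In h P /\ on_hray b q a h /\ In v P /\ on_bray b q a v.

Inductive opppair := OTRBL | OTLBR.
Definition opp_first (o : opppair) : quadtype := match o with OTRBL => TR | OTLBR => TL end.

(* the overlapping region of the opposite pair o, identified by the supporting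
   points (h1,v1) of the first quadrant and (h2,v2) of the opposite one, exists *)
Definition overlap_exists (P : list point) (b : R) (o : opppair) (h1 v1 h2 v2 : point) : Prop :=
  exists a1 a2, max_quad P b (opp_first o) a1 h1 v1 /\
    max_quad P b (opp_type (opp_first o)) a2 h2 v2 /\
    exists x, in_quad b (opp_first o) a1 x /\ in_quad b (opp_type (opp_first o)) a2 x.

Definition becomes (f : R -> Prop) (b0 : R) : Prop :=
  exists eps, eps > 0 /\
    (forall b, b0 - eps < b < b0 -> ~ f b) /\ (forall b, b0 < b < b0 + eps -> f b).
Definition ceases (f : R -> Prop) (b0 : R) : Prop :=
  exists eps, eps > 0 /\
    (forall b, b0 - eps < b < b0 -> f b) /\ (forall b, b0 < b < b0 + eps -> ~ f b).

Inductive event :=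
| Insertion (q : quadtype) (p : point) (b : R)
| Deletion (q : quadtype) (p : point) (b : R)
| Overlap (o : opppair) (h1 v1 h2 v2 : point) (b : R)
| Release (o : opppair) (h1 v1 h2 v2 : point) (b : R).

Definition is_event (P : list point) (e : event) : Prop :=
  match e with
  | Insertion q p b0 => 0 < b0 < PI /\ becomes (fun b => stair_vertex P b q p) b0
  | Deletion q p b0 => 0 < b0 < PI /\ ceases (fun b => stair_vertex P b q p) b0
  | Overlap o h1 v1 h2 v2 b0 =>
      0 < b0 < PI /\ becomes (fun b => overlap_exists P b o h1 v1 h2 v2) b0
  | Release o h1 v1 h2 v2 b0 =>
      0 < b0 < PI /\ ceases (fun b => overlap_exists P b o h1 v1 h2 v2) b0
  end.

Definition collinear (a b c : point) : Prop :=
  (fst b - fst a) * (snd c - snd a) - (snd b - snd a) * (fst c - fst a) = 0.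

Definition general_position (P : list point) : Prop :=
  (forall a b c, In a P -> In b P -> In c P -> a <> b -> a <> c -> b <> c ->
     ~ collinear a b c) /\
  (forall a b, In a P -> In b P -> a <> b -> snd a <> snd b).

(* Main.v *)
Require Import Defs.
From Stdlib Require Import Reals Lra Psatz List Classical Lia.
Open Scope R_scope.

Definition cot (b : R) := cos b / sin b.
Definition uu (c : R) (p : point) := fst p - c * snd p.

Lemma sin_pos b : 0 < b < PI -> 0 < sin b.
Proof. intros [h1 h2]; apply sin_gt_0; lra. Qed.

Lemma cot_decr b b' : 0 < b -> b < b' -> b' < PI -> cot b' < cot b.
Proof.
  intros h1 h2 h3. unfold cot.
  assert (s1 : 0 < sin b) by (apply sin_pos; lra).
  assert (s2 : 0 < sin b') by (apply sin_pos; lra).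
  assert (s3 : 0 < sin (b' - b)) by (apply sin_gt_0; lra).
  rewrite sin_minus in s3.
  apply (Rmult_lt_reg_r (sin b * sin b')). nra.
  field_simplify; try lra.
Qed.

Lemma cot_inj b b' : 0 < b < PI -> 0 < b' < PI -> cot b = cot b' -> b = b'.
Proof.
  intros h1 h2 h. destruct (Rtotal_order b b') as [l|[e|g]]; auto.
  - pose proof (cot_decr b b'); lra.
  - pose proof (cot_decr b' b); lra.
Qed.

Lemma in_quad_iff b q a x : 0 < b < PI ->
  (in_quad b q a x <-> sgn_t q * (snd x - snd a) > 0 /\ sgn_s q * (uu (cot b) x - uu (cot b) a) > 0).
Proof.
  intros hb. pose proof (sin_pos b hb) as hs.
  unfold in_quad, decomp, uu, cot. split.
  - intros [s [t [[e1 e2] [g1 g2]]]].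
    assert (ht : snd x - snd a = t * sin b) by lra.
    assert (hs' : fst x - cos b / sin b * snd x - (fst a - cos b / sin b * snd a) = s).
    { rewrite e1, e2. field. lra. }
    rewrite hs', ht. split; [|lra].
    destruct q; simpl in *; nra.
  - intros [g1 g2].
    exists (fst x - cos b / sin b * snd x - (fst a - cos b / sin b * snd a)),
           ((snd x - snd a) / sin b).
    split; [split|split].
    + field. lra.
    + field. lra.
    + lra.
    + assert (e : (snd x - snd a) / sin b = (snd x - snd a) * / sin b) by (unfold Rdiv; auto).
      rewrite e. assert (0 < / sin b) by (apply Rinv_0_lt_compat; lra).
      destruct q; simpl in *; nra.
Qed.

Lemma on_hray_iff b q a x : 0 < b < PI ->
  (on_hray b q a x <-> snd x = snd a /\ sgn_s q * (uu (cot b) x - uu (cot b) a) > 0).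
Proof.
  intros hb. unfold on_hray, decomp, uu. split.
  - intros [s [[e1 e2] g]]. split; [lra|]. rewrite e1, e2. replace (snd a + 0 * sin b) with (snd a) by ring.
    replace (fst a + s + 0 * cos b - cot b * snd a - (fst a - cot b * snd a)) with s by ring. auto.
  - intros [e g]. exists (fst x - fst a). split; [split|]; try lra.
    rewrite e in g. replace (fst x - cot b * snd a - (fst a - cot b * snd a)) with (fst x - fst a) in g by ring. auto.
Qed.

Lemma on_bray_iff b q a x : 0 < b < PI ->
  (on_bray b q a x <-> uu (cot b) x = uu (cot b) a /\ sgn_t q * (snd x - snd a) > 0).
Proof.
  intros hb. pose proof (sin_pos b hb) as hs. unfold on_bray, decomp, uu, cot. split.
  - intros [t [[e1 e2] g]]. rewrite e1, e2. split.
    + field. lra.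
    + replace (snd a + t * sin b - snd a) with (t * sin b) by ring. destruct q; simpl in *; nra.
  - intros [e g]. exists ((snd x - snd a) / sin b).
    assert (0 < / sin b) by (apply Rinv_0_lt_compat; lra).
    split; [split|].
    + apply (Rmult_eq_reg_r (sin b)); [|lra].
      assert (fst x * sin b - cos b * snd x = fst a * sin b - cos b * snd a).
      { apply (Rmult_eq_reg_r (/ sin b)); [|apply Rgt_not_eq; lra].
        field_simplify; try lra. field_simplify in e; try lra. }
      field_simplify; try lra; try nra.
    + field. lra.
    + unfold Rdiv. destruct q; simpl in *; nra.
Qed.

Definition incr (f : R -> Prop) := forall b b', 0 < b -> b < b' -> b' < PI -> f b -> f b'.
Definition decr (f : R -> Prop) := forall b b', 0 < b -> b < b' -> b' < PI -> f b' -> f b.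

Lemma quad_mono b b' q a x : 0 < b -> b < b' -> b' < PI ->
  match q with TR | BL => in_quad b q a x -> in_quad b' q a x
  | _ => in_quad b' q a x -> in_quad b q a x end.
Proof.
  intros h1 h2 h3. pose proof (cot_decr b b' h1 h2 h3) as hc.
  assert (hb : 0 < b < PI) by lra. assert (hb' : 0 < b' < PI) by lra.
  destruct q; rewrite !in_quad_iff by auto; unfold uu; simpl; intros [g1 g2]; split; try lra; nra.
Qed.

Lemma stair_mono P q p : match q with TR | BL => decr | _ => incr end (fun b => stair_vertex P b q p).
Proof.
  destruct q; intros b b' h1 h2 h3 [hin hf]; split; auto; intros x hx hq; apply (hf x hx);
  lazymatch goal with |- in_quad _ ?q _ _ => pose proof (quad_mono b b' q p x h1 h2 h3) as m end; simpl in m; auto.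
Qed.

Lemma becomes_decr_none f b0 : decr f -> 0 < b0 < PI -> becomes f b0 -> False.
Proof.
  intros hd h0 [e [pe [l r]]].
  set (m := Rmin e (Rmin (b0/2) ((PI - b0)/2)) / 2).
  assert (m0 : 0 < Rmin e (Rmin (b0/2) ((PI - b0)/2))) by (repeat apply Rmin_glb_lt; lra).
  assert (m1 : 0 < m) by (unfold m; lra).
  assert (m2 : m < e) by (unfold m; pose proof (Rmin_l e (Rmin (b0/2) ((PI - b0)/2))); lra).
  assert (m3 : m < b0/2) by (unfold m; pose proof (Rmin_r e (Rmin (b0/2) ((PI - b0)/2))); pose proof (Rmin_l (b0/2) ((PI - b0)/2)); lra).
  assert (m4 : m < (PI-b0)/2) by (unfold m; pose proof (Rmin_r e (Rmin (b0/2) ((PI - b0)/2))); pose proof (Rmin_r (b0/2) ((PI - b0)/2)); lra).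
  apply (l (b0 - m)); [lra|]. apply (hd (b0 - m) (b0 + m)); try lra. apply r; lra.
Qed.

Lemma becomes_incr_lt f a c : incr f -> 0 < a < PI -> 0 < c < PI -> a < c -> becomes f a -> becomes f c -> False.
Proof.
  intros hi ha hc hac [a1 [pa1 [_ hr]]] [e [pe [hl _]]].
  set (y := a + Rmin a1 (c - a) / 2).
  assert (y1 : a < y) by (unfold y; pose proof (Rmin_glb_lt a1 (c-a) 0); lra).
  assert (y2 : y < c) by (unfold y; pose proof (Rmin_r a1 (c-a)); lra).
  assert (y3 : y < a + a1) by (unfold y; pose proof (Rmin_l a1 (c-a)); lra).
  set (x := c - Rmin e (c - y) / 2).
  assert (x1 : y < x) by (unfold x; pose proof (Rmin_r e (c-y)); lra).
  assert (x2 : x < c) by (unfold x; pose proof (Rmin_glb_lt e (c-y) 0); lra).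
  assert (x3 : c - e < x) by (unfold x; pose proof (Rmin_l e (c-y)); lra).
  apply (hl x); [lra|]. apply (hi y x); try lra. apply hr; lra.
Qed.

Lemma becomes_unique f b0 b1 : incr f \/ decr f -> 0 < b0 < PI -> 0 < b1 < PI ->
  becomes f b0 -> becomes f b1 -> b0 = b1.
Proof.
  intros [hi|hd] h0 h1 e0 e1.
  - destruct (Rtotal_order b0 b1) as [l|[q|g]]; auto; exfalso.
    + exact (becomes_incr_lt f b0 b1 hi h0 h1 l e0 e1).
    + exact (becomes_incr_lt f b1 b0 hi h1 h0 g e1 e0).
  - exfalso; exact (becomes_decr_none f b0 hd h0 e0).
Qed.

Lemma ceases_becomes f b0 : ceases f b0 -> becomes (fun b => ~ f b) b0.
Proof. intros [e [pe [l r]]]; exists e; split; auto. Qed.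

Lemma incr_neg f : incr f -> decr (fun b => ~ f b).
Proof. intros h b b' a1 a2 a3 n fb; exact (n (h b b' a1 a2 a3 fb)). Qed.
Lemma decr_neg f : decr f -> incr (fun b => ~ f b).
Proof. intros h b b' a1 a2 a3 n fb; exact (n (h b b' a1 a2 a3 fb)). Qed.

Lemma ceases_unique f b0 b1 : incr f \/ decr f -> 0 < b0 < PI -> 0 < b1 < PI ->
  ceases f b0 -> ceases f b1 -> b0 = b1.
Proof.
  intros hm h0 h1 e0 e1. apply (becomes_unique (fun b => ~ f b)); auto using ceases_becomes.
  destruct hm; [right; apply incr_neg|left; apply decr_neg]; auto.
Qed.

Lemma stair_mono' P q p : incr (fun b => stair_vertex P b q p) \/ decr (fun b => stair_vertex P b q p).
Proof. pose proof (stair_mono P q p) as h; destruct q; simpl in h; auto. Qed.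

Definition sg (o : opppair) : R := match o with OTRBL => 1 | OTLBR => -1 end.
Definition su (s c : R) (p : point) := s * uu c p.

Definition OV (P : list point) (s c : R) (h1 v1 h2 v2 : point) : Prop :=
 In h1 P /\ In v1 P /\ In h2 P /\ In v2 P /\
 snd h1 < snd v1 /\ snd v2 < snd h2 /\ snd h1 < snd h2 /\
 su s c h1 > su s c v1 /\ su s c h2 < su s c v2 /\ su s c v1 < su s c v2 /\
 (forall z, In z P -> snd z > snd h1 -> su s c z <= su s c v1) /\
 (forall z, In z P -> snd z < snd h2 -> su s c z >= su s c v2).

Lemma char P b o h1 v1 h2 v2 : 0 < b < PI ->
  (overlap_exists P b o h1 v1 h2 v2 <-> OV P (sg o) (cot b) h1 v1 h2 v2).
Proof.
  intros hb. unfold overlap_exists, max_quad, P_free, OV, su. split.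
  - intros [a1 [a2 [[F1 [Ih1 [H1 [Iv1 B1]]]] [[F2 [Ih2 [H2 [Iv2 B2]]]] [x [X1 X2]]]]]].
    rewrite on_hray_iff in H1, H2 by auto. rewrite on_bray_iff in B1, B2 by auto.
    rewrite in_quad_iff in X1, X2 by auto.
    destruct o; simpl in *;
    destruct H1 as [H1a H1b]; destruct H2 as [H2a H2b]; destruct B1 as [B1a B1b];
    destruct B2 as [B2a B2b]; destruct X1 as [X1a X1b]; destruct X2 as [X2a X2b];
    repeat split; auto; try lra.
    all: first [ intros z hz hy; apply Rnot_lt_le; intro hc; apply (F1 z hz); rewrite in_quad_iff by auto; simpl; split; lra
    | intros z hz hy; apply Rnot_lt_ge; intro hc; apply (F2 z hz); rewrite in_quad_iff by auto; simpl; split; lra].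
  - intros [Ih1 [Iv1 [Ih2 [Iv2 [y1 [y2 [y3 [s1 [s2 [s3 [U D]]]]]]]]]]].
    set (c := cot b) in *.
    exists (uu c v1 + c * snd h1, snd h1), (uu c v2 + c * snd h2, snd h2).
    assert (e1 : uu c (uu c v1 + c * snd h1, snd h1) = uu c v1) by (unfold uu; simpl; ring).
    assert (e2 : uu c (uu c v2 + c * snd h2, snd h2) = uu c v2) by (unfold uu; simpl; ring).
    assert (X : exists x, in_quad b (opp_first o) (uu c v1 + c * snd h1, snd h1) x /\
       in_quad b (opp_type (opp_first o)) (uu c v2 + c * snd h2, snd h2) x).
    { exists (((uu c v1 + uu c v2)/2) + c * ((snd h1 + snd h2)/2), (snd h1 + snd h2)/2).
      rewrite !in_quad_iff by auto. fold c. rewrite e1, e2.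
      assert (e3 : uu c ((uu c v1 + uu c v2)/2 + c * ((snd h1 + snd h2)/2), (snd h1 + snd h2)/2) = (uu c v1 + uu c v2)/2) by (unfold uu; simpl; ring).
      rewrite e3; simpl. destruct o; unfold sg in *; simpl; lra. }
    assert (F1 : forall z, In z P -> ~ in_quad b (opp_first o) (uu c v1 + c * snd h1, snd h1) z).
    { intros z hz. rewrite in_quad_iff by auto. fold c; rewrite e1. simpl.
      pose proof (U z hz). destruct o; unfold sg in *; simpl; lra. }
    assert (F2 : forall z, In z P -> ~ in_quad b (opp_type (opp_first o)) (uu c v2 + c * snd h2, snd h2) z).
    { intros z hz. rewrite in_quad_iff by auto. fold c; rewrite e2. simpl.
      pose proof (D z hz). destruct o; unfold sg in *; simpl; lra. }
    assert (R1 : on_hray b (opp_first o) (uu c v1 + c * snd h1, snd h1) h1).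
    { rewrite on_hray_iff by auto. fold c; rewrite e1. simpl. destruct o; unfold sg in *; simpl; split; lra. }
    assert (R2 : on_hray b (opp_type (opp_first o)) (uu c v2 + c * snd h2, snd h2) h2).
    { rewrite on_hray_iff by auto. fold c; rewrite e2. simpl. destruct o; unfold sg in *; simpl; split; lra. }
    assert (R3 : on_bray b (opp_first o) (uu c v1 + c * snd h1, snd h1) v1).
    { rewrite on_bray_iff by auto. fold c; rewrite e1. simpl. destruct o; unfold sg in *; simpl; split; lra. }
    assert (R4 : on_bray b (opp_type (opp_first o)) (uu c v2 + c * snd h2, snd h2) v2).
    { rewrite on_bray_iff by auto. fold c; rewrite e2. simpl. destruct o; unfold sg in *; simpl; split; lra. }
    split; [|split]; auto; repeat split; auto.
Qed.

Lemma near_pos A B b0 : A * sin b0 + B * cos b0 > 0 ->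
  exists d, d > 0 /\ forall b, Rabs (b - b0) < d -> A * sin b + B * cos b > 0.
Proof.
  intros h.
  assert (hc : continuity_pt (fun b => A * sin b + B * cos b) b0) by reg.
  destruct (hc (A * sin b0 + B * cos b0) h) as [d [pd hd]].
  exists d; split; auto. intros b hb.
  destruct (Req_dec b b0) as [e|ne]; [subst; auto|].
  assert (k := hd b). simpl in k. unfold R_dist in k.
  assert (k2 : Rabs (A * sin b + B * cos b - (A * sin b0 + B * cos b0)) < A * sin b0 + B * cos b0).
  { apply k. split; auto. unfold D_x, no_cond; split; auto. }
  apply Rabs_def2 in k2. lra.
Qed.

Lemma su_identity s b z v : sin b <> 0 ->
  sin b * (su s (cot b) v - su s (cot b) z) =
  (s * (fst v - fst z)) * sin b + (- (s * (snd v - snd z))) * cos b.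
Proof. intros h. unfold su, uu, cot. field. auto. Qed.

Lemma near_su s b0 z v : 0 < b0 < PI -> su s (cot b0) z < su s (cot b0) v ->
  exists d, d > 0 /\ forall b, 0 < b < PI -> Rabs (b - b0) < d -> su s (cot b) z < su s (cot b) v.
Proof.
  intros hb h. pose proof (sin_pos b0 hb) as hs.
  assert (k : (s * (fst v - fst z)) * sin b0 + (- (s * (snd v - snd z))) * cos b0 > 0).
  { rewrite <- su_identity by lra. nra. }
  destruct (near_pos _ _ _ k) as [d [pd hd]]. exists d; split; auto.
  intros b hb' hbd. pose proof (sin_pos b hb') as hs'. specialize (hd b hbd).
  rewrite <- su_identity in hd by lra. nra.
Qed.

Lemma near_all (L : list point) (Q : point -> Prop) (F : point -> R -> Prop) b0 :
  (forall z, In z L -> Q z -> exists d, d > 0 /\ forall b, Rabs (b - b0) < d -> F z b) ->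
  exists d, d > 0 /\ forall b, Rabs (b - b0) < d -> forall z, In z L -> Q z -> F z b.
Proof.
  induction L as [|a L IH]; intros H.
  - exists 1; split; [lra|]. intros b _ z [].
  - destruct IH as [d1 [p1 h1]]. { intros z hz; apply H; right; auto. }
    destruct (classic (Q a)) as [qa|nqa].
    + destruct (H a (or_introl eq_refl) qa) as [d2 [p2 h2]].
      exists (Rmin d1 d2); split; [apply Rmin_glb_lt; auto|].
      intros b hb z [e|hz] hq.
      * subst. apply h2. pose proof (Rmin_r d1 d2); lra.
      * apply h1; auto. pose proof (Rmin_l d1 d2); lra.
    + exists d1; split; auto. intros b hb z [e|hz] hq.
      * subst; contradiction.
      * apply h1; auto.
Qed.

Definition Static (P : list point) (h1 v1 h2 v2 : point) : Prop :=
  In h1 P /\ In v1 P /\ In h2 P /\ In v2 P /\ snd h1 < snd v1 /\ snd v2 < snd h2 /\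
  snd h1 < snd h2 /\ snd v2 <= snd h1 /\ (forall z, In z P -> ~ (snd h1 < snd z < snd h2)).

Definition Closed (P : list point) (s c : R) (h1 v1 h2 v2 : point) : Prop :=
  (forall z, In z P -> snd z > snd h1 -> su s c z <= su s c v1) /\
  (forall z, In z P -> snd z < snd h2 -> su s c z >= su s c v2) /\ su s c v1 <= su s c v2.

Definition Utie (P : list point) (s c : R) (h1 v1 : point) : Prop :=
  exists z, In z P /\ z <> v1 /\ snd z > snd h1 /\ su s c z = su s c v1.
Definition Dtie (P : list point) (s c : R) (h2 v2 : point) : Prop :=
  exists z, In z P /\ z <> v2 /\ snd z < snd h2 /\ su s c z = su s c v2.

Lemma OV_static P s c h1 v1 h2 v2 : OV P s c h1 v1 h2 v2 -> Static P h1 v1 h2 v2.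
Proof.
  intros [Ih1 [Iv1 [Ih2 [Iv2 [y1 [y2 [y3 [s1 [s2 [s3 [U D]]]]]]]]]]].
  repeat split; auto.
  - apply Rnot_lt_le; intro hc. pose proof (U v2 Iv2 hc). lra.
  - intros z hz [a1 a2]. pose proof (U z hz a1). pose proof (D z hz a2). lra.
Qed.

Lemma tie_analysis P s b0 h1 v1 h2 v2 : 0 < b0 < PI ->
  (forall d, d > 0 -> exists b, 0 < b < PI /\ Rabs (b - b0) < d /\ OV P s (cot b) h1 v1 h2 v2) ->
  (forall d, d > 0 -> exists b, 0 < b < PI /\ Rabs (b - b0) < d /\ ~ OV P s (cot b) h1 v1 h2 v2) ->
  Static P h1 v1 h2 v2 /\ Closed P s (cot b0) h1 v1 h2 v2 /\
  (su s (cot b0) v1 = su s (cot b0) v2 \/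
   (su s (cot b0) v1 < su s (cot b0) v2 /\
    (Utie P s (cot b0) h1 v1 \/ Dtie P s (cot b0) h2 v2))).
Proof.
  intros hb H1 H2.
  assert (St : Static P h1 v1 h2 v2).
  { destruct (H1 1 ltac:(lra)) as [b [_ [_ o]]]. eapply OV_static; eauto. }
  assert (lim : forall z v, (forall b, 0 < b < PI -> OV P s (cot b) h1 v1 h2 v2 -> su s (cot b) z <= su s (cot b) v) ->
             su s (cot b0) z <= su s (cot b0) v).
  { intros z v hzv. apply Rnot_lt_le; intro hc.
    destruct (near_su s b0 v z hb hc) as [d [pd hd]].
    destruct (H1 d pd) as [b [hb1 [hb2 o]]]. pose proof (hzv b hb1 o). pose proof (hd b hb1 hb2). lra. }
  assert (Cl : Closed P s (cot b0) h1 v1 h2 v2).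
  { split; [|split].
    - intros z hz hy. apply lim. intros b _ o. destruct o as [_ [_ [_ [_ [_ [_ [_ [_ [_ [_ [U _]]]]]]]]]]]. auto.
    - intros z hz hy. apply Rle_ge. apply lim. intros b _ o. destruct o as [_ [_ [_ [_ [_ [_ [_ [_ [_ [_ [_ D]]]]]]]]]]].
      apply Rge_le; auto.
    - apply lim. intros b _ o. destruct o as [_ [_ [_ [_ [_ [_ [_ [_ [_ [s3 _]]]]]]]]]]. lra. }
  split; auto. split; auto.
  destruct Cl as [CU [CD Cv]].
  destruct (Req_dec (su s (cot b0) v1) (su s (cot b0) v2)) as [e|ne]; [left; auto|right].
  assert (lt : su s (cot b0) v1 < su s (cot b0) v2) by lra. split; auto.
  destruct (classic (Utie P s (cot b0) h1 v1)) as [u|nu]; [left; auto|].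
  destruct (classic (Dtie P s (cot b0) h2 v2)) as [dd|nd]; [right; auto|].
  exfalso.
  destruct St as [Ih1 [Iv1 [Ih2 [Iv2 [y1 [y2 [y3 [y4 nb]]]]]]]].
  destruct (near_su s b0 v1 v2 hb lt) as [d1 [p1 k1]].
  assert (l2 : su s (cot b0) v1 < su s (cot b0) h1) by (pose proof (CD h1 Ih1 y3); lra).
  destruct (near_su s b0 v1 h1 hb l2) as [d2 [p2 k2]].
  assert (l3 : su s (cot b0) h2 < su s (cot b0) v2) by (pose proof (CU h2 Ih2 y3); lra).
  destruct (near_su s b0 h2 v2 hb l3) as [d3 [p3 k3]].
  destruct (near_all P (fun z => snd z > snd h1 /\ z <> v1)
     (fun z b => 0 < b < PI -> su s (cot b) z < su s (cot b) v1) b0) as [d4 [p4 k4]].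
  { intros z hz [hy hne].
    cut (su s (cot b0) z < su s (cot b0) v1).
    { intro hh; destruct (near_su s b0 z v1 hb hh) as [dd [pdd hdd]]; exists dd; split; auto. }
    pose proof (CU z hz hy). destruct (Req_dec (su s (cot b0) z) (su s (cot b0) v1)) as [e|]; [|lra].
    exfalso; apply nu; exists z; auto. }
  destruct (near_all P (fun z => snd z < snd h2 /\ z <> v2)
     (fun z b => 0 < b < PI -> su s (cot b) v2 < su s (cot b) z) b0) as [d5 [p5 k5]].
  { intros z hz [hy hne].
    cut (su s (cot b0) v2 < su s (cot b0) z).
    { intro hh; destruct (near_su s b0 v2 z hb hh) as [dd [pdd hdd]]; exists dd; split; auto. }
    pose proof (CD z hz hy). destruct (Req_dec (su s (cot b0) z) (su s (cot b0) v2)) as [e|]; [|lra].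
    exfalso; apply nd; exists z; auto. }
  set (d := Rmin d1 (Rmin d2 (Rmin d3 (Rmin d4 d5)))).
  assert (pd : d > 0) by (unfold d; repeat apply Rmin_glb_lt; auto).
  assert (q1 : d <= d1) by (unfold d; apply Rmin_l).
  assert (q2 : d <= d2) by (unfold d; eapply Rle_trans; [apply Rmin_r|apply Rmin_l]).
  assert (q3 : d <= d3) by (unfold d; eapply Rle_trans; [apply Rmin_r|]; eapply Rle_trans; [apply Rmin_r|apply Rmin_l]).
  assert (q4 : d <= d4) by (unfold d; eapply Rle_trans; [apply Rmin_r|]; eapply Rle_trans; [apply Rmin_r|];
     eapply Rle_trans; [apply Rmin_r|apply Rmin_l]).
  assert (q5 : d <= d5) by (unfold d; eapply Rle_trans; [apply Rmin_r|]; eapply Rle_trans; [apply Rmin_r|];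
     eapply Rle_trans; [apply Rmin_r|apply Rmin_r]).
  destruct (H2 d pd) as [b [hb1 [hb2 no]]]. apply no.
  repeat split; auto.
  - apply Rlt_gt. apply k2; auto; lra.
  - apply k3; auto; lra.
  - apply k1; auto; lra.
  - intros z hz hy. destruct (classic (z = v1)) as [e|ne0]; [subst; lra|].
    apply Rlt_le. apply (k4 b ltac:(lra) z hz (conj hy ne0) hb1).
  - intros z hz hy. destruct (classic (z = v2)) as [e|ne0]; [subst; lra|].
    apply Rgt_ge. apply (k5 b ltac:(lra) z hz (conj hy ne0) hb1).
Qed.

Lemma y_inj P a b : general_position P -> In a P -> In b P -> snd a = snd b -> a = b.
Proof.
  intros [_ g] ha hb e. destruct (classic (a = b)) as [x|n]; auto. exfalso; exact (g a b ha hb n e).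
Qed.

Definition TU (P : list point) (s c : R) (j : point) : Prop :=
  exists j', In j' P /\ snd j' > snd j /\ su s c j' = su s c j /\
    forall x, In x P -> snd x > snd j -> su s c x <= su s c j.
Definition TD (P : list point) (s c : R) (j : point) : Prop :=
  exists j', In j' P /\ snd j' < snd j /\ su s c j' = su s c j /\
    forall x, In x P -> snd x < snd j -> su s c x >= su s c j.
Definition ENDc (P : list point) (s c : R) (h1 : point) : Prop :=
  exists a d, In a P /\ In d P /\ snd a > snd h1 /\ snd d <= snd h1 /\ su s c a = su s c d /\
    (forall x, In x P -> snd x > snd h1 -> su s c x <= su s c a) /\
    (forall x, In x P -> snd x <= snd h1 -> su s c x >= su s c d).

Lemma sq_cases s (a b : R) : s = 1 \/ s = -1 -> s * a <= 0 -> s * b >= 0 -> a * b <= 0.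
Proof. intros [e|e] h1 h2; subst; nra. Qed.

Lemma TU_unique P s c0 c1 j : s = 1 \/ s = -1 -> TU P s c0 j -> TU P s c1 j -> c0 = c1.
Proof.
  intros hs [j1 [i1 [y1 [e1 u1]]]] [j2 [i2 [y2 [e2 u2]]]].
  pose proof (u1 j2 i2 y2) as a. pose proof (u2 j1 i1 y1) as b.
  unfold su, uu in *.
  assert (A : s * ((c1 - c0) * (snd j1 - snd j)) <= 0) by (destruct hs; subst; nra).
  assert (B : s * ((c0 - c1) * (snd j2 - snd j)) <= 0) by (destruct hs; subst; nra).
  destruct (Rtotal_order c0 c1) as [l|[q|g]]; auto; exfalso; destruct hs; subst; nra.
Qed.

Lemma TD_unique P s c0 c1 j : s = 1 \/ s = -1 -> TD P s c0 j -> TD P s c1 j -> c0 = c1.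
Proof.
  intros hs [j1 [i1 [y1 [e1 u1]]]] [j2 [i2 [y2 [e2 u2]]]].
  pose proof (u1 j2 i2 y2) as a. pose proof (u2 j1 i1 y1) as b.
  unfold su, uu in *.
  assert (A : s * ((c1 - c0) * (snd j1 - snd j)) >= 0) by (destruct hs; subst; nra).
  assert (B : s * ((c0 - c1) * (snd j2 - snd j)) >= 0) by (destruct hs; subst; nra).
  destruct (Rtotal_order c0 c1) as [l|[q|g]]; auto; exfalso; destruct hs; subst; nra.
Qed.

Lemma END_unique P s c0 c1 h : s = 1 \/ s = -1 -> ENDc P s c0 h -> ENDc P s c1 h -> c0 = c1.
Proof.
  intros hs [a [d [ia [id [ya [yd [e [ua ud]]]]]]]] [a' [d' [ia' [id' [ya' [yd' [e' [ua' ud']]]]]]]].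
  pose proof (ua a' ia' ya') as k1. pose proof (ud d' id' yd') as k2.
  pose proof (ua' a ia ya) as k3. pose proof (ud' d id yd) as k4.
  unfold su, uu in *.
  assert (A : s * ((c0 - c1) * (snd a' - snd d')) >= 0) by (destruct hs; subst; nra).
  assert (B : s * ((c1 - c0) * (snd a - snd d)) >= 0) by (destruct hs; subst; nra).
  destruct (Rtotal_order c0 c1) as [l|[q|g]]; auto; exfalso; destruct hs; subst; nra.
Qed.

Lemma maxy_unique P (A : point -> Prop) h h' : general_position P -> In h P -> In h' P ->
  A h -> A h' -> (forall x, In x P -> A x -> snd x <= snd h) -> (forall x, In x P -> A x -> snd x <= snd h') ->
  h = h'.
Proof.
  intros g i i' a a' m m'. apply (y_inj P); auto.
  pose proof (m h' i' a'). pose proof (m' h i a). lra.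
Qed.
Lemma miny_unique P (A : point -> Prop) h h' : general_position P -> In h P -> In h' P ->
  A h -> A h' -> (forall x, In x P -> A x -> snd x >= snd h) -> (forall x, In x P -> A x -> snd x >= snd h') ->
  h = h'.
Proof.
  intros g i i' a a' m m'. apply (y_inj P); auto.
  pose proof (m h' i' a'). pose proof (m' h i a). lra.
Qed.

Lemma h1_char P s c h1 v1 h2 v2 j : Static P h1 v1 h2 v2 -> Closed P s c h1 v1 h2 v2 ->
  su s c v1 < su s c v2 -> su s c j = su s c v1 ->
  su s c h1 > su s c j /\ (forall x, In x P -> su s c x > su s c j -> snd x <= snd h1).
Proof.
  intros [Ih1 [Iv1 [Ih2 [Iv2 [y1 [y2 [y3 [y4 nb]]]]]]]] [CU [CD Cv]] lt e. split.
  - pose proof (CD h1 Ih1 y3). lra.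
  - intros x hx hs. apply Rnot_lt_le. intro hy. pose proof (CU x hx hy). lra.
Qed.

Lemma h2_char P s c h1 v1 h2 v2 j : Static P h1 v1 h2 v2 -> Closed P s c h1 v1 h2 v2 ->
  su s c v1 < su s c v2 -> su s c j = su s c v2 ->
  su s c h2 < su s c j /\ (forall x, In x P -> su s c x < su s c j -> snd x >= snd h2).
Proof.
  intros [Ih1 [Iv1 [Ih2 [Iv2 [y1 [y2 [y3 [y4 nb]]]]]]]] [CU [CD Cv]] lt e. split.
  - pose proof (CU h2 Ih2 y3). lra.
  - intros x hx hs. apply Rnot_lt_ge. intro hy. pose proof (CD x hx hy). lra.
Qed.

Lemma h1_of_h2 P h1 v1 h2 v2 h1' v1' v2' : general_position P ->
  Static P h1 v1 h2 v2 -> Static P h1' v1' h2 v2' -> h1 = h1'.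
Proof.
  intros g [Ih1 [_ [Ih2 [_ [_ [_ [y3 [_ nb]]]]]]]] [Ih1' [_ [_ [_ [_ [_ [y3' [_ nb']]]]]]]].
  apply (y_inj P); auto.
  destruct (Rtotal_order (snd h1) (snd h1')) as [l|[q|gg]]; auto; exfalso.
  - apply (nb h1' Ih1'); lra.
  - apply (nb' h1 Ih1); lra.
Qed.

Lemma h2_of_h1 P h1 v1 h2 v2 v1' h2' v2' : general_position P ->
  Static P h1 v1 h2 v2 -> Static P h1 v1' h2' v2' -> h2 = h2'.
Proof.
  intros g [Ih1 [_ [Ih2 [_ [_ [_ [y3 [_ nb]]]]]]]] [_ [_ [Ih2' [_ [_ [_ [y3' [_ nb']]]]]]]].
  apply (y_inj P); auto.
  destruct (Rtotal_order (snd h2) (snd h2')) as [l|[q|gg]]; auto; exfalso.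
  - apply (nb' h2 Ih2); lra.
  - apply (nb h2' Ih2'); lra.
Qed.

Lemma two_c_eq P s c c' p q : general_position P -> In p P -> In q P -> s = 1 \/ s = -1 -> c <> c' ->
  su s c p = su s c q -> su s c' p = su s c' q -> p = q.
Proof.
  intros g ip iq hs hc e e'. destruct (classic (p = q)) as [x|n]; auto. exfalso.
  assert (hy : snd p <> snd q) by (intro h; apply n; apply (y_inj P); auto).
  unfold su, uu in *.
  assert (k : (c - c') * (snd p - snd q) = 0) by (destruct hs; subst; nra).
  apply Rmult_integral in k. destruct k; [apply hc|apply hy]; lra.
Qed.

Lemma OV_unique P s c c' h1 v1 h2 v2 v1' h2' v2' : general_position P -> s = 1 \/ s = -1 -> c <> c' ->
  OV P s c h1 v1 h2 v2 -> OV P s c' h1 v1 h2 v2 -> OV P s c h1 v1' h2' v2' -> OV P s c' h1 v1' h2' v2' ->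
  v1 = v1' /\ h2 = h2' /\ v2 = v2'.
Proof.
  intros g hs hc o1 o2 o3 o4.
  assert (e2 : h2 = h2') by (eapply h2_of_h1; eauto using OV_static). subst h2'.
  destruct o1 as [_ [Iv1 [_ [Iv2 [y1 [y2 [_ [_ [_ [_ [U1 D1]]]]]]]]]]].
  destruct o2 as [_ [_ [_ [_ [_ [_ [_ [_ [_ [_ [U2 D2]]]]]]]]]]].
  destruct o3 as [_ [Iv1' [_ [Iv2' [y1' [y2' [_ [_ [_ [_ [U3 D3]]]]]]]]]]].
  destruct o4 as [_ [_ [_ [_ [_ [_ [_ [_ [_ [_ [U4 D4]]]]]]]]]]].
  split; [|split]; auto.
  - apply (two_c_eq P s c c'); auto.
    + pose proof (U1 v1' Iv1' y1'). pose proof (U3 v1 Iv1 y1). lra.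
    + pose proof (U2 v1' Iv1' y1'). pose proof (U4 v1 Iv1 y1). lra.
  - apply (two_c_eq P s c c'); auto.
    + pose proof (D1 v2' Iv2' y2'). pose proof (D3 v2 Iv2 y2). lra.
    + pose proof (D2 v2' Iv2' y2'). pose proof (D4 v2 Iv2 y2). lra.
Qed.

Definition tq (q : quadtype) : nat := match q with TR => 0 | TL => 1 | BR => 2 | BL => 3 end.
Definition to (o : opppair) : nat := match o with OTRBL => 0 | OTLBR => 1 end.
Lemma tq_lt q : (tq q < 4)%nat. Proof. destruct q; simpl; lia. Qed.
Lemma to_lt o : (to o < 2)%nat. Proof. destruct o; simpl; lia. Qed.
Lemma tq_inj q q' : tq q = tq q' -> q = q'. Proof. destruct q, q'; simpl; intro; try lia; auto. Qed.
Lemma to_inj o o' : to o = to o' -> o = o'. Proof. destruct o, o'; simpl; intro; try lia; auto. Qed.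
Lemma sg_cases o : sg o = 1 \/ sg o = -1. Proof. destruct o; simpl; auto. Qed.

Definition Cause (P : list point) (s c : R) (cz : nat) (j h1 v1 h2 v2 : point) : Prop :=
  Static P h1 v1 h2 v2 /\ Closed P s c h1 v1 h2 v2 /\
  match cz with
  | O => j = h1 /\ su s c v1 = su s c v2
  | S O => su s c v1 < su s c v2 /\ snd j > snd h1 /\ su s c j = su s c v1 /\ TU P s c j
  | _ => su s c v1 < su s c v2 /\ snd j < snd h2 /\ su s c j = su s c v2 /\ TD P s c j
  end.

Definition Good (P : list point) (e : event) (tag : nat) (p : point) : Prop :=
  match e with
  | Insertion q p' _ => tag = tq q /\ p = p'
  | Deletion q p' _ => tag = (4 + tq q)%nat /\ p = p'
  | Overlap o h1 v1 h2 v2 b => exists cz, (cz < 3)%nat /\ tag = (8 + 3 * to o + cz)%nat /\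
       Cause P (sg o) (cot b) cz p h1 v1 h2 v2
  | Release o h1 v1 h2 v2 b => exists cz, (cz < 3)%nat /\ tag = (14 + 3 * to o + cz)%nat /\
       Cause P (sg o) (cot b) cz p h1 v1 h2 v2
  end.

Lemma right_pts (g : R -> Prop) b0 e : 0 < b0 < PI -> e > 0 -> (forall b, b0 < b < b0 + e -> g b) ->
  forall d, d > 0 -> exists b, 0 < b < PI /\ Rabs (b - b0) < d /\ g b.
Proof.
  intros hb he h d hd.
  assert (m0 : 0 < Rmin d (Rmin e (PI - b0))) by (repeat apply Rmin_glb_lt; lra).
  pose proof (Rmin_l d (Rmin e (PI - b0))). pose proof (Rmin_r d (Rmin e (PI - b0))).
  pose proof (Rmin_l e (PI - b0)). pose proof (Rmin_r e (PI - b0)).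
  exists (b0 + Rmin d (Rmin e (PI - b0)) / 2). split; [lra|split].
  - rewrite Rabs_right; lra.
  - apply h; lra.
Qed.

Lemma left_pts (g : R -> Prop) b0 e : 0 < b0 < PI -> e > 0 -> (forall b, b0 - e < b < b0 -> g b) ->
  forall d, d > 0 -> exists b, 0 < b < PI /\ Rabs (b - b0) < d /\ g b.
Proof.
  intros hb he h d hd.
  assert (m0 : 0 < Rmin d (Rmin e b0)) by (repeat apply Rmin_glb_lt; lra).
  pose proof (Rmin_l d (Rmin e b0)). pose proof (Rmin_r d (Rmin e b0)).
  pose proof (Rmin_l e b0). pose proof (Rmin_r e b0).
  exists (b0 - Rmin d (Rmin e b0) / 2). split; [lra|split].
  - rewrite Rabs_left; lra.
  - apply h; lra.
Qed.

Lemma two_right b0 e e' : 0 < b0 < PI -> e > 0 -> e' > 0 ->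
  exists b1 b2, b1 <> b2 /\ 0 < b1 < PI /\ 0 < b2 < PI /\ b0 < b1 < b0 + e /\ b0 < b1 < b0 + e' /\
    b0 < b2 < b0 + e /\ b0 < b2 < b0 + e'.
Proof.
  intros hb he he'.
  assert (m0 : 0 < Rmin e (Rmin e' (PI - b0))) by (repeat apply Rmin_glb_lt; lra).
  pose proof (Rmin_l e (Rmin e' (PI - b0))). pose proof (Rmin_r e (Rmin e' (PI - b0))).
  pose proof (Rmin_l e' (PI - b0)). pose proof (Rmin_r e' (PI - b0)).
  exists (b0 + Rmin e (Rmin e' (PI - b0)) / 2), (b0 + Rmin e (Rmin e' (PI - b0)) / 4).
  repeat split; lra.
Qed.

Lemma two_left b0 e e' : 0 < b0 < PI -> e > 0 -> e' > 0 ->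
  exists b1 b2, b1 <> b2 /\ 0 < b1 < PI /\ 0 < b2 < PI /\ b0 - e < b1 < b0 /\ b0 - e' < b1 < b0 /\
    b0 - e < b2 < b0 /\ b0 - e' < b2 < b0.
Proof.
  intros hb he he'.
  assert (m0 : 0 < Rmin e (Rmin e' b0)) by (repeat apply Rmin_glb_lt; lra).
  pose proof (Rmin_l e (Rmin e' b0)). pose proof (Rmin_r e (Rmin e' b0)).
  pose proof (Rmin_l e' b0). pose proof (Rmin_r e' b0).
  exists (b0 - Rmin e (Rmin e' b0) / 2), (b0 - Rmin e (Rmin e' b0) / 4).
  repeat split; lra.
Qed.

Lemma cause_exists P o h1 v1 h2 v2 b0 : general_position P -> 0 < b0 < PI ->
  (forall d, d > 0 -> exists b, 0 < b < PI /\ Rabs (b - b0) < d /\ OV P (sg o) (cot b) h1 v1 h2 v2) ->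
  (forall d, d > 0 -> exists b, 0 < b < PI /\ Rabs (b - b0) < d /\ ~ OV P (sg o) (cot b) h1 v1 h2 v2) ->
  exists cz j, (cz < 3)%nat /\ In j P /\ Cause P (sg o) (cot b0) cz j h1 v1 h2 v2.
Proof.
  intros g hb H1 H2.
  destruct (tie_analysis P (sg o) b0 h1 v1 h2 v2 hb H1 H2) as [St [Cl T]].
  set (s := sg o) in *. set (c := cot b0) in *.
  pose proof St as St'. destruct St' as [Ih1 [Iv1 [Ih2 [Iv2 [y1 [y2 [y3 [y4 nb]]]]]]]].
  pose proof Cl as Cl'. destruct Cl' as [CU [CD Cv]].
  destruct T as [eq|[lt [[z [iz [nz [yz ez]]]]|[z [iz [nz [yz ez]]]]]]].
  - exists O, h1. repeat split; auto.
  - assert (hy : snd z <> snd v1) by (intro h; apply nz; apply (y_inj P); auto).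
    destruct (Rtotal_order (snd z) (snd v1)) as [l|[q|gg]]; [|contradiction|].
    + exists 1%nat, z. split; [lia|split; auto]. split; auto. split; auto. simpl.
      repeat split; auto. exists v1. repeat split; auto; try lra.
      intros x hx hxy. rewrite ez. apply CU; auto; lra.
    + exists 1%nat, v1. split; [lia|split; auto]. split; auto. split; auto. simpl.
      repeat split; auto; try lra. exists z. repeat split; auto; try lra.
      intros x hx hxy. apply CU; auto; lra.
  - assert (hy : snd z <> snd v2) by (intro h; apply nz; apply (y_inj P); auto).
    destruct (Rtotal_order (snd z) (snd v2)) as [l|[q|gg]]; [|contradiction|].
    + exists 2%nat, v2. split; [lia|split; auto]. split; auto. split; auto. simpl.
      repeat split; auto; try lra. exists z. repeat split; auto; try lra.
      intros x hx hxy. apply CD; auto; lra.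
    + exists 2%nat, z. split; [lia|split; auto]. split; auto. split; auto. simpl.
      repeat split; auto. exists v2. repeat split; auto; try lra.
      intros x hx hxy. rewrite ez. apply CD; auto; lra.
Qed.

Lemma good_exists P e : general_position P -> is_event P e ->
  exists tag p, (tag < 20)%nat /\ In p P /\ Good P e tag p.
Proof.
  intros g. destruct e as [q p b|q p b|o h1 v1 h2 v2 b|o h1 v1 h2 v2 b]; simpl; intros [hb ev].
  - exists (tq q), p. destruct ev as [e [pe [_ r]]].
    destruct (right_pts _ b e hb pe r 1 ltac:(lra)) as [b' [_ [_ [ip _]]]].
    pose proof (tq_lt q). repeat split; auto; lia.
  - exists (4 + tq q)%nat, p. destruct ev as [e [pe [l _]]].
    destruct (left_pts _ b e hb pe l 1 ltac:(lra)) as [b' [_ [_ [ip _]]]].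
    pose proof (tq_lt q). repeat split; auto; lia.
  - destruct ev as [e [pe [l r]]].
    destruct (cause_exists P o h1 v1 h2 v2 b g hb) as [cz [j [hcz [ij hc]]]].
    + intros d hd. destruct (right_pts _ b e hb pe r d hd) as [b' [hb' [hd' ov]]].
      exists b'; split; [auto|split; [auto|]]. apply char; auto.
    + intros d hd. destruct (left_pts _ b e hb pe l d hd) as [b' [hb' [hd' ov]]].
      exists b'; split; [auto|split; [auto|]]. rewrite <- char; auto.
    + exists (8 + 3 * to o + cz)%nat, j. pose proof (to_lt o). split; [lia|split; auto].
      exists cz; auto.
  - destruct ev as [e [pe [l r]]].
    destruct (cause_exists P o h1 v1 h2 v2 b g hb) as [cz [j [hcz [ij hc]]]].
    + intros d hd. destruct (left_pts _ b e hb pe l d hd) as [b' [hb' [hd' ov]]].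
      exists b'; split; [auto|split; [auto|]]. apply char; auto.
    + intros d hd. destruct (right_pts _ b e hb pe r d hd) as [b' [hb' [hd' ov]]].
      exists b'; split; [auto|split; [auto|]]. rewrite <- char; auto.
    + exists (14 + 3 * to o + cz)%nat, j. pose proof (to_lt o). split; [lia|split; auto].
      exists cz; auto.
Qed.

Lemma cause_END P s c j h1 v1 h2 v2 : Cause P s c 0 j h1 v1 h2 v2 -> j = h1 /\ ENDc P s c h1.
Proof.
  intros [[Ih1 [Iv1 [Ih2 [Iv2 [y1 [y2 [y3 [y4 nb]]]]]]]] [[CU [CD Cv]] [ej e]]].
  split; auto. exists v1, v2. repeat split; auto.
  intros x hx hy. apply CD; auto; lra.
Qed.

Lemma ov_core P o b b' h1 v1 h2 v2 h1' v1' h2' v2' cz j : general_position P ->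
  0 < b < PI -> 0 < b' < PI ->
  Cause P (sg o) (cot b) cz j h1 v1 h2 v2 -> Cause P (sg o) (cot b') cz j h1' v1' h2' v2' ->
  b = b' /\ h1 = h1'.
Proof.
  intros g hb hb' c1 c2. pose proof (sg_cases o) as hs.
  destruct cz as [|[|cz]].
  - apply cause_END in c1. apply cause_END in c2. destruct c1 as [e1 E1]. destruct c2 as [e2 E2].
    subst. split; auto. apply cot_inj; auto. apply (END_unique P (sg o)) with h1'; auto.
  - destruct c1 as [S1 [C1 [l1 [y1 [e1 T1]]]]]. destruct c2 as [S2 [C2 [l2 [y2 [e2 T2]]]]].
    assert (eb : b = b') by (apply cot_inj; auto; apply (TU_unique P (sg o)) with j; auto). subst b'.
    split; auto.
    destruct (h1_char _ _ _ _ _ _ _ _ S1 C1 l1 e1) as [a1 m1].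
    destruct (h1_char _ _ _ _ _ _ _ _ S2 C2 l2 e2) as [a2 m2].
    apply (maxy_unique P (fun x => su (sg o) (cot b) x > su (sg o) (cot b) j)); auto.
    + destruct S1; auto.
    + destruct S2; auto.
  - destruct c1 as [S1 [C1 [l1 [y1 [e1 T1]]]]]. destruct c2 as [S2 [C2 [l2 [y2 [e2 T2]]]]].
    assert (eb : b = b') by (apply cot_inj; auto; apply (TD_unique P (sg o)) with j; auto). subst b'.
    split; auto.
    destruct (h2_char _ _ _ _ _ _ _ _ S1 C1 l1 e1) as [a1 m1].
    destruct (h2_char _ _ _ _ _ _ _ _ S2 C2 l2 e2) as [a2 m2].
    assert (eh : h2 = h2').
    { apply (miny_unique P (fun x => su (sg o) (cot b) x < su (sg o) (cot b) j)); auto.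
      + destruct S1 as [_ [_ [? _]]]; auto.
      + destruct S2 as [_ [_ [? _]]]; auto. }
    subst h2'. eapply h1_of_h2; eauto.
Qed.

Lemma good_inj P e e' tag p : general_position P -> is_event P e -> is_event P e' ->
  Good P e tag p -> Good P e' tag p -> e = e'.
Proof.
  intros g ev ev'.
  destruct e as [q p1 b|q p1 b|o h1 v1 h2 v2 b|o h1 v1 h2 v2 b];
  destruct e' as [q' p1' b'|q' p1' b'|o' h1' v1' h2' v2' b'|o' h1' v1' h2' v2' b'];
  simpl in *; intros G1 G2;
  try (pose proof (tq_lt q); pose proof (tq_lt q'); try pose proof (to_lt o); try pose proof (to_lt o');
       destruct G1 as [? [? [? ?]]]; destruct G2 as [? [? [? ?]]]; lia);
  try (pose proof (tq_lt q); pose proof (tq_lt q'); destruct G1; destruct G2; lia);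
  try (pose proof (tq_lt q); pose proof (to_lt o'); destruct G1; destruct G2 as [? [? [? ?]]]; lia);
  try (pose proof (tq_lt q'); pose proof (to_lt o); destruct G2; destruct G1 as [? [? [? ?]]]; lia);
  try (pose proof (to_lt o); pose proof (to_lt o');
       destruct G1 as [? [? [? ?]]]; destruct G2 as [? [? [? ?]]]; lia).
  - destruct G1 as [t1 e1]; destruct G2 as [t2 e2]. subst. apply tq_inj in t2; subst.
    destruct ev as [hb ev]; destruct ev' as [hb' ev'].
    f_equal. apply (becomes_unique (fun b => stair_vertex P b q' p1')); auto using stair_mono'.
  - destruct G1 as [t1 e1]; destruct G2 as [t2 e2]. subst. assert (tq q = tq q') by lia.
    apply tq_inj in H; subst.
    destruct ev as [hb ev]; destruct ev' as [hb' ev'].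
    f_equal. apply (ceases_unique (fun b => stair_vertex P b q' p1')); auto using stair_mono'.
  - destruct G1 as [cz [hcz [t1 c1]]]; destruct G2 as [cz' [hcz' [t2 c2]]].
    pose proof (to_lt o); pose proof (to_lt o').
    assert (to o = to o') by lia. assert (cz = cz') by lia. apply to_inj in H1. subst o' cz'.
    destruct ev as [hb [e [pe [l r]]]]; destruct ev' as [hb' [e' [pe' [l' r']]]].
    destruct (ov_core P o b b' h1 v1 h2 v2 h1' v1' h2' v2' cz p g hb hb' c1 c2) as [eb eh]. subst b' h1'.
    destruct (two_right b e e' hb pe pe') as [b1 [b2 [ne [i1 [i2 [r1 [r1' [r2 r2']]]]]]]].
    pose proof (proj1 (char P b1 o h1 v1 h2 v2 i1) (r b1 r1)).
    pose proof (proj1 (char P b2 o h1 v1 h2 v2 i2) (r b2 r2)).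
    pose proof (proj1 (char P b1 o h1 v1' h2' v2' i1) (r' b1 r1')).
    pose proof (proj1 (char P b2 o h1 v1' h2' v2' i2) (r' b2 r2')).
    assert (cne : cot b1 <> cot b2) by (intro h; apply ne; apply cot_inj; auto).
    destruct (OV_unique P (sg o) (cot b1) (cot b2) h1 v1 h2 v2 v1' h2' v2' g (sg_cases o) cne)
      as [? [? ?]]; auto. subst; auto.
  - destruct G1 as [cz [hcz [t1 c1]]]; destruct G2 as [cz' [hcz' [t2 c2]]].
    pose proof (to_lt o); pose proof (to_lt o').
    assert (to o = to o') by lia. assert (cz = cz') by lia. apply to_inj in H1. subst o' cz'.
    destruct ev as [hb [e [pe [l r]]]]; destruct ev' as [hb' [e' [pe' [l' r']]]].
    destruct (ov_core P o b b' h1 v1 h2 v2 h1' v1' h2' v2' cz p g hb hb' c1 c2) as [eb eh]. subst b' h1'.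
    destruct (two_left b e e' hb pe pe') as [b1 [b2 [ne [i1 [i2 [r1 [r1' [r2 r2']]]]]]]].
    pose proof (proj1 (char P b1 o h1 v1 h2 v2 i1) (l b1 r1)).
    pose proof (proj1 (char P b2 o h1 v1 h2 v2 i2) (l b2 r2)).
    pose proof (proj1 (char P b1 o h1 v1' h2' v2' i1) (l' b1 r1')).
    pose proof (proj1 (char P b2 o h1 v1' h2' v2' i2) (l' b2 r2')).
    assert (cne : cot b1 <> cot b2) by (intro h; apply ne; apply cot_inj; auto).
    destruct (OV_unique P (sg o) (cot b1) (cot b2) h1 v1 h2 v2 v1' h2' v2' g (sg_cases o) cne)
      as [? [? ?]]; auto. subst; auto.
Qed.

Lemma count_inj {X : Type} (l : list X) (R : X -> nat -> Prop) : NoDup l ->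
  forall S : list nat, (forall e, In e l -> exists m, In m S /\ R e m) ->
  (forall e e' m, In e l -> In e' l -> R e m -> R e' m -> e = e') -> (length l <= length S)%nat.
Proof.
  induction 1 as [|a l na nd IH]; intros S H inj; simpl; [lia|].
  destruct (H a (or_introl eq_refl)) as [m [im rm]].
  assert (k : (length l <= length (remove Nat.eq_dec m S))%nat).
  { apply IH.
    - intros e he. destruct (H e (or_intror he)) as [m' [im' rm']]. exists m'. split; auto.
      apply in_in_remove; auto. intro q; subst m'. apply na.
      rewrite (inj a e m (or_introl eq_refl) (or_intror he) rm rm'); auto.
    - intros e e' m' h h' r r'. apply (inj e e' m'); auto; right; auto. }
  pose proof (remove_length_lt Nat.eq_dec S m im). lia.
Qed.

Theorem lemma1 :
  exists C : nat, forall P : list point, NoDup P -> general_position P ->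
    forall l : list event, NoDup l -> (forall e, In e l -> is_event P e) ->
      (length l <= C * length P)%nat.
Proof.
  exists 20%nat. intros P _ g l nl hl.
  set (R := fun e m => exists tag i, (tag < 20)%nat /\ (i < length P)%nat /\ m = (tag + 20 * i)%nat /\
             Good P e tag (nth i P (0,0))).
  replace (20 * length P)%nat with (length (seq 0 (20 * length P))) by apply length_seq.
  apply (count_inj l R nl).
  - intros e he. destruct (good_exists P e g (hl e he)) as [tag [p [ht [ip gd]]]].
    destruct (In_nth P p (0,0) ip) as [i [hi ei]].
    exists (tag + 20 * i)%nat. split.
    + apply in_seq. lia.
    + exists tag, i. rewrite ei. repeat split; auto.
  - intros e e' m he he' [t [i [ht [hi [em ge]]]]] [t' [i' [ht' [hi' [em' ge']]]]].
    assert (t = t' /\ i = i') as [? ?] by lia. subst t' i'.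
    apply (good_inj P e e' t (nth i P (0,0))); auto.
Qed.
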